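(* Let $\Gamma$ be a group. For every finite symmetric subset $S\subseteq\Gamma$ we have $N'(\mathbf{1}_S)=e(\Gamma,S)\,|S|$.
   Context: For $f\colon\Gamma\to\mathbf{C}$, $N'(f)=\sup_F\frac1{|F|}\sum_{a,b\in F}|f(a^{-1}b)|$, the supremum over all non-empty finite $F\subseteq\Gamma$. $\mathrm{Cay}(\Gamma,S)$ is the graph with vertex set $\Gamma$ and an edge between $g$ and $gs$ for each $s\in S$; $\partial_SF$ is the set of edges joining a finite set $F$ to its complement; $h(\Gamma,S)=\inf_F|\partial_SF|/|F|$ over non-empty finite $F$; $e(\Gamma,S)=1-h(\Gamma,S)/|S|$. *)

(* Defs.v *)
From HB Require Import structures.
From mathcomp Require Import all_boot all_order all_algebra.
From mathcomp Require Import monoid.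
From mathcomp Require Import finmap.
From mathcomp Require Import all_classical all_reals.
From mathcomp Require Import ereal.

Set Implicit Arguments.
Unset Strict Implicit.
Unset Printing Implicit Defensive.

Import Order.TTheory GRing.Theory Num.Theory.
Local Open Scope fset_scope.
Local Open Scope ring_scope.

Definition symmetric_fset (G : groupType) (S : {fset G}) : Prop :=
  forall s, s \in S -> (s^-1)%g \in S.

Definition Nprime (R : realType) (G : groupType) (V : normedZmodType R)
    (f : G -> V) : \bar R :=
  ereal_sup [set x : \bar R | exists F : {fset G}, F != fset0 /\
     x = ((#|` F|%:R)^-1 * \sum_(a <- F) \sum_(b <- F) `|f (a^-1 * b)%g|)%:E].

Definition indic (R : realType) (G : groupType) (S : {fset G}) (g : G) : R :=
  if g \in S then 1 else 0.

(* ∂_S F: edges of Cay(Γ,S) joining F to its complement.  Each such edge    *)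
(* {g, g s} with g ∈ F, g s ∉ F is represented by the ordered pair          *)
(* (g, g s) (its orientation leaving F), which determines it uniquely.      *)
Definition edge_boundary (G : groupType) (S F : {fset G}) : {fset G * G} :=
  [fset p | p in F `*` [fset (g * s)%g | g in F, s in S] &
            ((p.1^-1 * p.2)%g \in S) && (p.2 \notin F)].

Definition cheeger (R : realType) (G : groupType) (S : {fset G}) : R :=
  inf [set r : R | exists F : {fset G}, F != fset0 /\
     r = (#|` edge_boundary S F|%:R) / (#|` F|%:R)].

Definition econst (R : realType) (G : groupType) (S : {fset G}) : R :=
  1 - cheeger R S / (#|` S|%:R).

(* Main.v *)
Require Import Defs.
From HB Require Import structures.
From mathcomp Require Import all_boot all_order all_algebra.
From mathcomp Require Import monoid finmap.
From mathcomp Require Import all_classical all_reals ereal.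
Import Order.TTheory GRing.Theory Num.Theory.
Local Open Scope fset_scope.
Local Open Scope ring_scope.

Lemma sum_eq_mem (R : realType) (T : eqType) (r : seq T) (x : T) : uniq r ->
  \sum_(s <- r) ((x == s)%:R : R) = (x \in r)%:R.
Proof.
move=> ur; case: (boolP (x \in r)) => xr.
  rewrite (bigD1_seq x) //= eqxx big1 ?addr0 // => i /negbTE.
  by rewrite eq_sym => ->.
by rewrite big1_seq // => i /= ir; case: eqP => // ex; rewrite ex ir in xr.
Qed.

Lemma countA (R : realType) (G : groupType) (S F : {fset G}) (a : G) :
  \sum_(b <- F) indic R S (a^-1 * b)%g = \sum_(s <- S) ((a * s)%g \in F)%:R.
Proof.
transitivity (\sum_(b <- F) \sum_(s <- S) (((a^-1 * b)%g == s)%:R : R)).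
  by apply: eq_bigr => b _; rewrite sum_eq_mem ?fset_uniq // /indic; case: (_ \in _).
rewrite exchange_big /=; apply: eq_bigr => s _.
rewrite -(@sum_eq_mem R G F (a * s)%g (fset_uniq F)); apply: eq_bigr => b _.
have -> : ((a^-1 * b)%g == s) = ((a * s)%g == b); last by [].
by apply/eqP/eqP => [<-|<-]; [rewrite mulVKg | rewrite mulKg].
Qed.

Lemma countB (G : groupType) (S F : {fset G}) :
  #|` edge_boundary S F| = (\sum_(a <- F) \sum_(s <- S) ((a * s)%g \notin F))%N.
Proof.
have -> : edge_boundary S F = [fset (a, (a * s)%g) | a in F, s in [fset s in S | (a * s)%g \notin F]].
  apply/fsetP => -[p1 p2]; rewrite /edge_boundary !inE /=.
  apply/idP/idP.
    case/and3P => /andP [p1F p2M] ps p2F.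
    apply/(@imfset2P _ _ G (fun=> G)); exists p1 => //; exists (p1^-1 * p2)%g; last by rewrite mulVKg.
    by rewrite !inE /= ps mulVKg p2F.
  case/(@imfset2P _ _ G (fun=> G)) => a aF [s]; rewrite !inE /= => /andP [sS asF] [-> ->].
  rewrite mulKg; apply/and3P; split => //; apply/andP; split => //.
  apply/(@imfset2P _ _ G (fun=> G)); exists a => //; exists s => //.
rewrite card_fset_sum1 big_imfset2 /=; last by move=> [x1 y1] [x2 y2] _ _ /= [<-] /mulgI ->.
apply: eq_bigr => a _; rewrite big_fset /= sum1_count -big_mkcond /=.
by rewrite -sum1_count.
Qed.
Lemma cardR (R : realType) (T : choiceType) (A : {fset T}) :
  (#|` A|%:R : R) = \sum_(x <- A) 1.
Proof. by rewrite card_fset_sum1 natr_sum. Qed.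

Lemma countAB (R : realType) (G : groupType) (S F : {fset G}) :
  \sum_(a <- F) \sum_(b <- F) `|indic R S (a^-1 * b)%g| + (#|` edge_boundary S F|%:R : R)
  = #|` F|%:R * #|` S|%:R.
Proof.
have E1 : \sum_(a <- F) \sum_(b <- F) `|indic R S (a^-1 * b)%g|
   = \sum_(a <- F) \sum_(s <- S) (((a * s)%g \in F)%:R : R).
  apply: eq_bigr => a _; rewrite -countA; apply: eq_bigr => b _.
  by rewrite /indic; case: ifP; rewrite ?normr1 ?normr0.
have E2 : (#|` edge_boundary S F|%:R : R)
   = \sum_(a <- F) \sum_(s <- S) (((a * s)%g \notin F)%:R : R).
  rewrite countB natr_sum; apply: eq_bigr => a _; by rewrite natr_sum.
rewrite E1 E2 -big_split /= cardR mulr_suml; apply: eq_bigr => a _.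
rewrite -big_split /= cardR mul1r; apply: eq_bigr => s _.
by case: ((a * s)%g \in F); rewrite ?addr0 ?add0r.
Qed.
Local Open Scope classical_set_scope.
Theorem proposition4p2 (R : realType) (G : groupType) (S : {fset G}) :
  symmetric_fset S ->
  Nprime (indic R S) = (econst R S * (#|` S|%:R))%:E.
Proof.
move=> _.
set c : R := #|` S|%:R.
set A := [set r : R | exists F : {fset G}, F != fset0 /\
     r = (#|` edge_boundary S F|%:R) / (#|` F|%:R)].
have A0 : A !=set0.
  exists ((#|` edge_boundary S [fset 1%g]|%:R) / (#|` [fset (1%g : G)]|%:R)).
  by exists [fset 1%g]; split => //; apply/eqP => /fsetP/(_ 1%g); rewrite !inE eqxx.
have Age0 : forall r, A r -> 0 <= r.
  by move=> r [F [_ ->]]; rewrite divr_ge0.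
have inf_ge0 : 0 <= inf A by apply: lb_le_inf => // r /Age0.
have key : forall F : {fset G}, F != fset0 ->
    (#|` F|%:R)^-1 * \sum_(a <- F) \sum_(b <- F) `|indic R S (a^-1 * b)%g|
    = c - (#|` edge_boundary S F|%:R) / (#|` F|%:R).
  move=> F F0.
  have Fn0 : (#|` F|%:R : R) != 0 by rewrite pnatr_eq0 cardfs_eq0.
  have := @countAB R G S F; rewrite -/c => H.
  apply: (mulfI Fn0); rewrite mulrA divff // mul1r mulrBr [_ * (_ / _)]mulrC divfK //.
  by rewrite -H addrK.
have setE : [set x : \bar R | exists F : {fset G}, F != fset0 /\
     x = ((#|` F|%:R)^-1 * \sum_(a <- F) \sum_(b <- F) `|indic R S (a^-1 * b)%g|)%:E]
   = EFin @` [set c - r | r in A].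
  apply/seteqP; split => x.
    move=> [F [F0 ->]]; exists (c - (#|` edge_boundary S F|%:R) / (#|` F|%:R)).
      by exists ((#|` edge_boundary S F|%:R) / (#|` F|%:R)) => //; exists F.
    by rewrite key.
  move=> [_ [r [F [F0 ->]] <-] <-]; exists F; split => //; by rewrite key.
rewrite /Nprime setE ereal_sup_EFin; last 2 first.
- by exists c => _ [r /Age0 r0 <-]; rewrite lerBlDr lerDl.
- by case: A0 => r Ar; exists (c - r), r.
congr (_%:E).
have supE : sup [set c - r | r in A] = c - inf A.
  have -> : [set c - r | r in A] = [set x + y | x in [set c] & y in (-%R @` A)].
    apply/seteqP; split => x.
      by move=> [r Ar <-]; exists c => //; exists (- r) => //; exists r.
    by move=> [_ -> [_ [r Ar <-] <-]]; exists r.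
  rewrite sup_sumE ?sup1 /inf ?opprK //.
  split; first by case: A0 => r Ar; exists (- r), r.
  by exists 0 => _ [r /Age0 r0 <-]; rewrite oppr_le0.
rewrite supE /econst /cheeger -/A -/c.
have [c0|cn0] := eqVneq c 0.
  rewrite c0 mulr0 sub0r; apply/eqP; rewrite oppr_eq0 eq_le inf_ge0 andbT.
  move/eqP: c0; rewrite /c pnatr_eq0 => /eqP /cardfs0_eq S0.
  apply: (ge_inf (E := A)); last first; last by exists 0 => r /Age0.
  exists [fset 1%g]; split; first by apply/eqP => /fsetP/(_ 1%g); rewrite !inE eqxx.
  by rewrite countB S0 big1 ?mul0r // => a _; rewrite big_seq_fset0.
by rewrite mulrBl mul1r divfK.
Qed.
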